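(* Let $\mathcal{M}$ be a complete Riemannian submanifold of $\mathbb{R}^n$ with the induced Riemannian metric, let $f:\mathbb{R}^n\to\mathbb{R}$ be a proper lower semicontinuous function, and let $\tilde f$ be any smoothing function of $f$. If $x^*\in\mathcal{M}$ is a local minimizer of $f$ on $\mathcal{M}$, then $x^*$ is a stationary point of $f$ associated with $\tilde f$ on $\mathcal{M}$, i.e. \[ \liminf_{x\to x^*,\ x\in\mathcal{M},\ \mu\downarrow 0}\|\operatorname{grad}\tilde f(x,\mu)\|=0 . \]
   Context: A function $\tilde f:\mathbb{R}^n\times\mathbb{R}_+\to\mathbb{R}$ is a smoothing function of $f$ if $\tilde f(\cdot,\mu)$ is continuously differentiable on $\mathbb{R}^n$ for every $\mu>0$, $\lim_{z\to x,\mu\downarrow0}\tilde f(z,\mu)=f(x)$ for every $x$, and there exist a constant $\kappa>0$ and a function $\omega:(0,\infty)\to(0,\infty)$ with $\lim_{\mu\downarrow0}\omega(\mu)=0$ such that $|\tilde f(x,\mu)-f(x)|\le\kappa\,\omega(\mu)$ for all $x$ and $\mu>0$. Here $\operatorname{grad}\tilde f(x,\mu)$ denotes the Riemannian gradient of $\tilde f(\cdot,\mu)$ at $x\in\mathcal{M}$, which equals $\operatorname{Proj}_{T_x\mathcal{M}}\nabla_x\tilde f(x,\mu)$, the orthogonal projection onto the tangent space $T_x\mathcal{M}$. *)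

(* Defs.v *)
From HB Require Import structures.
From mathcomp Require Import all_boot all_order all_algebra.
From mathcomp Require Import all_classical all_reals all_analysis.
Set Implicit Arguments. Unset Strict Implicit. Unset Printing Implicit Defensive.
Import Order.TTheory GRing.Theory Num.Theory.
Import numFieldNormedType.Exports.
Local Open Scope classical_set_scope.
Local Open Scope ring_scope.

Section Defs.
Variable R : realType.

(* Euclidean inner product and Euclidean norm on R^n
   (the library norm on 'rV is the max norm, so we do not use it). *)
Definition dotv n (u v : 'rV[R]_n) : R := (u *m v^T) 0 0.
Definition enorm n (u : 'rV[R]_n) : R := Num.sqrt (dotv u u).

Fixpoint dirn (V W : normedModType R) (vs : seq V) (f : V -> W) : V -> W :=
  match vs with
  | [::] => f
  | v :: vs' => fun x => 'D_v (dirn vs' f) x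
  end.

Definition smooth (V W : normedModType R) (f : V -> W) : Prop :=
  forall vs : seq V, continuous (dirn vs f) /\
    forall (v x : V), derivable (dirn vs f) x v.

Definition egrad n (g : 'rV[R]_n -> R) (x : 'rV[R]_n) : 'rV[R]_n :=
  \row_(i < n) 'D_(delta_mx 0 i) g x.

Definition C1 n (g : 'rV[R]_n -> R) : Prop :=
  (forall x, differentiable g x) /\ continuous (egrad g).

(* Embedded (smooth) submanifold of R^n of dimension d, via local defining
   functions: around each p in M there are an open U and a smooth
   F : R^n -> R^(n-d) with M /\ U = F^-1(0) /\ U and DF(x) of rank n-d on M /\ U. *)
Definition embedded_submanifold n (M : set 'rV[R]_n) : Prop :=
  exists d : nat, (d <= n)%N /\
  forall p, M p -> exists (U : set 'rV[R]_n) (F : 'rV[R]_n -> 'rV[R]_(n - d)),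
    [/\ open U, U p, smooth F,
        M `&` U = [set x | U x /\ F x = 0] &
        forall x, M x -> U x ->
          forall w : 'rV[R]_(n - d), exists v : 'rV[R]_n, 'D_v F x = w].

Definition curve_in n (M : set 'rV[R]_n) (x : 'rV[R]_n) (c : R -> 'rV[R]_n) :=
  [/\ smooth (c : R^o -> 'rV[R]_n), c 0 = x &
      exists2 e : R, 0 < e & forall t : R, `|t| < e -> M (c t)].

Definition tangent_space n (M : set 'rV[R]_n) (x : 'rV[R]_n) : set 'rV[R]_n :=
  [set v | exists c, curve_in M x c /\ derive1 (c : R^o -> _) 0 = v].

Definition proj_tangent n (M : set 'rV[R]_n) (x v : 'rV[R]_n) : 'rV[R]_n :=
  xget 0 [set p | tangent_space M x p /\
                  forall w, tangent_space M x w -> dotv (v - p) w = 0].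

Definition rgrad n (M : set 'rV[R]_n) (ft : 'rV[R]_n -> R -> R)
  (x : 'rV[R]_n) (mu : R) : 'rV[R]_n :=
  proj_tangent M x (egrad (ft^~ mu) x).

(* Riemannian distance induced on M: infimum of lengths of smooth curves
   gamma in M joining x to y (+oo if there is none). *)
Definition curve_length n (g : R -> 'rV[R]_n) : \bar R :=
  (\int[lebesgue_measure]_(t in `[0%R, 1%R]) (enorm (derive1 (g : R^o -> _) t))%:E)%E.

Definition riem_dist n (M : set 'rV[R]_n) (x y : 'rV[R]_n) : \bar R :=
  ereal_inf [set curve_length g | g in
    [set g : R -> 'rV[R]_n | smooth (g : R^o -> 'rV[R]_n) /\
       g 0 = x /\ g 1 = y /\ (forall t : R, 0 <= t <= 1 -> M (g t))]].

Definition riem_complete n (M : set 'rV[R]_n) : Prop :=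
  forall u : nat -> 'rV[R]_n, (forall k, M (u k)) ->
    (forall e : R, 0 < e -> exists N, forall k l, (N <= k)%N -> (N <= l)%N ->
        (riem_dist M (u k) (u l) < e%:E)%E) ->
    exists2 l, M l & forall e : R, 0 < e -> exists N, forall k, (N <= k)%N ->
        (riem_dist M (u k) l < e%:E)%E.

Definition smoothing_function n (f : 'rV[R]_n -> R) (ft : 'rV[R]_n -> R -> R) :=
  [/\ forall mu, 0 < mu -> C1 (ft^~ mu),
      forall x, (fun p : 'rV[R]_n * R => ft p.1 p.2)
                  @ filter_prod (nbhs x) (0^'+) --> f x &
      exists (kappa : R) (omega : R -> R),
        [/\ 0 < kappa, forall mu, 0 < mu -> 0 < omega mu,
            omega @ 0^'+ --> 0 &
            forall x mu, 0 < mu -> `|ft x mu - f x| <= kappa * omega mu]].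

Definition local_minimizer_on n (M : set 'rV[R]_n) (f : 'rV[R]_n -> R) (xs : 'rV[R]_n) :=
  M xs /\ \forall x \near xs, M x -> f xs <= f x.

Definition stationary_assoc n (M : set 'rV[R]_n) (ft : 'rV[R]_n -> R -> R) (xs : 'rV[R]_n) :=
  limf_einf (fun p : 'rV[R]_n * R => (enorm (rgrad M ft p.1 p.2))%:E)
            (filter_prod (within M (nbhs xs)) (0^'+)) = 0%E.

End Defs.

(* Main.v *)
Require Import Defs.
From HB Require Import structures.
From mathcomp Require Import all_boot all_order all_algebra.
From mathcomp Require Import all_classical all_reals all_analysis.
From mathcomp Require Import ring lra.
Import Order.TTheory GRing.Theory Num.Theory.
Import numFieldNormedType.Exports.
Local Open Scope classical_set_scope.
Local Open Scope ring_scope.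
Section H.
Variable R : realType.
Variable n : nat.
Implicit Types (u v w p d : 'rV[R]_n).

Lemma dotvE u v : dotv u v = \sum_(i < n) u 0 i * v 0 i.
Proof. by rewrite /dotv !mxE; apply: eq_bigr => i _; rewrite mxE. Qed.

Lemma dotv_ge0 u : 0 <= dotv u u.
Proof. by rewrite dotvE; apply: sumr_ge0 => i _; rewrite -expr2 sqr_ge0. Qed.

Lemma dotvBl u v w : dotv (u - v) w = dotv u w - dotv v w.
Proof.
rewrite !dotvE -sumrB; apply: eq_bigr => i _; rewrite !mxE; ring.
Qed.

Lemma dotv_exp p d : dotv (p + 2 *: d) (p + 2 *: d) =
  dotv p p + 4 * dotv d p + 4 * dotv d d.
Proof.
rewrite !dotvE !mulr_sumr -!big_split /=; apply: eq_bigr => i _.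
rewrite !mxE; ring.
Qed.

Lemma chain_grad (g : 'rV[R]_n -> R) (c : R -> 'rV[R]_n) t :
  (forall x, differentiable g x) -> derivable c t 1 ->
  is_derive t 1 (g \o c) (dotv (egrad g (c t)) ('D_1 c t)).
Proof.
move=> dg dct.
have dc : differentiable c t by apply/derivable1_diffP.
have dgc : differentiable (g \o c) t := differentiable_comp dc (dg _).
apply: DeriveDef; first by apply/derivable1_diffP.
rewrite deriveE // diff_comp // /=.
have -> : 'D_1 c t = 'd c t 1 by rewrite deriveE.
set w := 'd c t 1.
rewrite {1}(row_sum_delta w) linear_sum dotvE; apply: eq_bigr => i _.
rewrite linearZ /= -deriveE // mxE mulrC.
by [].
Qed.

Definition pen (xs y : 'rV[R]_n) := dotv (y - xs) (y - xs).

Lemma pen_derive xs (c : R -> 'rV[R]_n) t : derivable c t 1 ->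
  is_derive t 1 (pen xs \o c) (2 * dotv (c t - xs) ('D_1 c t)).
Proof.
move=> dct.
have E : pen xs \o c = \sum_(i < n) (fun s => (c s 0 i - xs 0 i) * (c s 0 i - xs 0 i)).
  by apply/funext => s; rewrite fct_sumE /= /pen dotvE; apply: eq_bigr => i _; rewrite !mxE.
rewrite E.
have dci : forall i, is_derive t 1 (fun s => c s 0 i) ('D_1 c t 0 i).
  move=> i; have /derivable_mxP/(_ 0 i) di := dct.
  apply: DeriveDef => //; by rewrite derive_mx // mxE.
have dfi : forall i, is_derive t 1 (fun s => c s 0 i - xs 0 i) ('D_1 c t 0 i).
  move=> i; apply: DeriveDef.
    by apply: derivableB; [case: (dci i) | exact: derivable_cst].
  rewrite deriveB //; case: (dci i) => _ ->.
  by rewrite derive_cst subr0.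
apply: is_derive_eq.
rewrite dotvE mulr_sumr; apply: eq_bigr => i _.
rewrite !mxE /=; rewrite /GRing.scale /=; ring.
Qed.

Lemma first_order (M : set 'rV[R]_n) xs (g : 'rV[R]_n -> R) xm (r : R) :
  (forall x, differentiable g x) -> 0 < r ->
  (forall y, M y -> `|xm - y| < r -> g xm + pen xs xm <= g y + pen xs y) ->
  forall w, tangent_space M xm w -> dotv (egrad g xm) w + 2 * dotv (xm - xs) w = 0.
Proof.
move=> dg r0 hmin w [c [[sc c0 [e e0 ce]] <-]].
have dc : forall t : R, derivable c t 1.
  by move=> t; exact: ((sc [::]).2 (1 : R^o) (t : R^o)).
have cc : continuous c.
  by move=> t; exact: ((sc [::]).1 (t : R^o)).
pose phi : R -> R := (g \o c) + (pen xs \o c).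
have dphi : forall t : R, is_derive t (1:R) phi
    (dotv (egrad g (c t)) ('D_1 c t) + 2 * dotv (c t - xs) ('D_1 c t)).
  move=> t; apply: is_deriveD; [exact: chain_grad | exact: pen_derive].
have /cvgrPdist_lt /(_ r r0) := cc 0.
rewrite c0 => /nbhs_ballP [e' /= e'0 He'].
pose e2 := Num.min e e'.
have e20 : 0 < e2 by rewrite lt_min e0 e'0.
have H0 : is_derive (0:R) 1 phi 0.
  apply: (@derive1_at_min R phi (- e2) e2 0).
  - by rewrite ge0_cp // ltW.
  - by move=> t _; case: (dphi t).
  - by rewrite in_itv /= oppr_lt0 e20.
  move=> t; rewrite in_itv /= => /andP [h1 h2].
  have : `|t| < e2 by rewrite ltr_norml h1 h2.
  rewrite lt_min => /andP [hte hte'].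
  change (g (c 0) + pen xs (c 0) <= g (c t) + pen xs (c t)).
  rewrite c0; apply: hmin; first exact: ce.
  by apply: He'; rewrite /ball /= sub0r normrN.
case: H0 => _ E0; case: (dphi 0) => _ E1; rewrite E0 c0 in E1.
by rewrite derive1E -E1.
Qed.

Lemma proj_bound (M : set 'rV[R]_n) xm a d :
  (forall w, tangent_space M xm w -> dotv a w + 2 * dotv d w = 0) ->
  dotv (proj_tangent M xm a) (proj_tangent M xm a) <= 4 * dotv d d.
Proof.
move=> H; rewrite /proj_tangent; case: xgetP => [p _ [Tp orth] | _].
  have h1 := orth p Tp; rewrite dotvBl in h1.
  have h2 := H p Tp.
  have h3 := dotv_ge0 (p + 2 *: d); rewrite dotv_exp in h3.
  lra.
have -> : dotv (0 : 'rV[R]_n) 0 = 0.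
  by rewrite dotvE big1 // => i _; rewrite mxE mul0r.
by rewrite mulr_ge0 // dotv_ge0.
Qed.

Lemma norm_lt_dot u (eta : R) : 0 < eta -> dotv u u < eta ^+ 2 -> `|u| < eta.
Proof.
move=> e0 h.
rewrite [`|u|]/Num.Def.normr /= mx_normrE.
apply: bigmax_lt => // -[i j] _ /=.
rewrite (ord1 i).
have hj : `|u 0 j| ^+ 2 <= dotv u u.
  rewrite dotvE (bigD1 j) //= real_normK ?num_real // expr2 lerDl.
  by apply: sumr_ge0 => k _; rewrite -expr2 sqr_ge0.
have n0 := normr_ge0 (u 0 j).
nra.
Qed.

Lemma pen_cont xs : continuous (pen xs).
Proof.
move=> y.
have -> : pen xs = \sum_(i < n)
    (fun z : 'rV[R]_n => (z 0 i - xs 0 i) * (z 0 i - xs 0 i)).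
  apply/funext => z; rewrite fct_sumE /pen dotvE.
  by apply: eq_bigr => i _; rewrite !mxE.
apply: (big_ind (fun h : 'rV[R]_n -> R => {for y, continuous h})).
- exact: cst_continuous.
- by move=> f g hf hg; exact: continuousD.
move=> i _.
have hc : {for y, continuous (fun z : 'rV[R]_n => z 0 i - xs 0 i)}.
  apply: (@continuousB _ _ _ (fun z : 'rV[R]_n => z 0 i) (fun=> xs 0 i)).
    exact: coord_continuous.
  exact: cst_continuous.
exact: (@continuousM _ _ (fun z : 'rV[R]_n => z 0 i - xs 0 i) (fun z => z 0 i - xs 0 i) y hc hc).
Qed.

End H.
Arguments pen {R n}.
Arguments dotvE {R n}.
Arguments norm_lt_dot {R n}.
Arguments first_order {R n M xs g xm r}.
Arguments proj_bound {R n M xm a d}.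
Arguments pen_cont {R n}.

Theorem proposition3p6 (R : realType) (n : nat) (M : set 'rV[R]_n)
  (f : 'rV[R]_n -> R) (ft : 'rV[R]_n -> R -> R) (xs : 'rV[R]_n) :
  embedded_submanifold M ->
  riem_complete M ->
  lower_semicontinuous (fun x => (f x)%:E) ->
  smoothing_function f ft ->
  local_minimizer_on M f xs ->
  stationary_assoc M ft xs.
Proof.
move=> [d [_ Hman]] _ _ [Hc1 _ [kappa [omega [k0 om0 omcvg Hbd]]]] [Mxs Hloc].
have [U [F [oU Uxs sF MU _]]] := Hman xs Mxs.
have Fc : continuous F := (sF [::]).1.
have /nbhs_ballP [r1 /= r10 Hr1] := Hloc.
have /nbhs_ballP [r2 /= r20 Hr2] : nbhs xs U by apply: open_nbhs_nbhs.
pose del := Num.min r1 r2 / 2.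
have mr0 : 0 < Num.min r1 r2 by rewrite lt_min r10 r20.
have del0 : 0 < del by rewrite divr_gt0.
have delr1 : del < r1.
  apply: (@lt_le_trans _ _ (Num.min r1 r2)); last by rewrite ge_min lexx => //.
  by rewrite /del ltr_pdivrMr // ltr_pMr // ltr1n.
have delr2 : del < r2.
  apply: (@lt_le_trans _ _ (Num.min r1 r2)); last by rewrite ge_min lexx orbT => //.
  by rewrite /del ltr_pdivrMr // ltr_pMr // ltr1n.
pose K := M `&` [set y | `|xs - y| <= del].
have KU : forall y, `|xs - y| <= del -> U y /\ (M y -> f xs <= f y).
  move=> y hy; split.
    by apply: Hr2; rewrite -ball_normE /ball_ /=; exact: le_lt_trans hy delr2.
  by apply: Hr1; rewrite -ball_normE /ball_ /=; exact: le_lt_trans hy delr1.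
have Kcl : closed K.
  have -> : K = closed_ball_ Num.Def.normr xs del `&`
      (F @^-1` closed_ball_ Num.Def.normr 0 0).
    apply/seteqP; split => y /=.
      move=> [My hy]; have [Uy _] := KU y hy.
      have : (M `&` U) y by split.
      rewrite MU => -[_ Fy]; split => //.
      by rewrite /closed_ball_ /= Fy subrr normr0.
    move=> [hy hF]; split => //.
    have [Uy _] := KU y hy.
    have : [set x | U x /\ F x = 0] y.
      split => //; move: hF; rewrite /closed_ball_ /= sub0r normrN normr_le0.
      by move/eqP.
    by rewrite -MU => -[].
  apply: closedI; first exact: closed_closed_ball_.
  apply: preimage_closed; last exact: closed_closed_ball_.
  by move=> y _; exact: Fc.
have Kb : [bounded x | x in K].
  rewrite /bounded_near.
  near=> B => y [_ hy] /=.
  have -> : y = xs - (xs - y) by rewrite opprB addrC subrK.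
  apply: (le_trans (ler_normB _ _)).
  have : `|xs| + del <= B.
    by near: B; apply: nbhs_pinfty_ge; rewrite num_real.
  by apply: le_trans; rewrite lerD2l.
have Kc : compact K := bounded_closed_compact Kb Kcl.
have Kxs : K xs by split => //=; rewrite subrr normr0 ltW.
have key : forall mu, 0 < mu -> exists xm, [/\ M xm,
    pen xs xm <= 2 * (kappa * omega mu) &
    (pen xs xm < (del / 2) ^+ 2 ->
      dotv (rgrad M ft xm mu) (rgrad M ft xm mu) <= 4 * pen xs xm)].
  move=> mu mu0.
  have [dg _] := Hc1 mu mu0.
  pose G y := ft y mu + pen xs y.
  have Gc : continuous G.
    move=> y; apply: continuousD; last exact: pen_cont.
    exact: differentiable_continuous (dg y).
  have [xm Kxm Hxm] := compact_EVT_min (ex_intro _ xs Kxs) Kc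
    (continuous_subspaceT Gc).
  rewrite inE in Kxm; case: Kxm => Mxm hxm.
  exists xm; split => //.
    have h1 := Hxm xs (mem_set Kxs).
    have h2 := Hbd xs mu mu0; have h3 := Hbd xm mu mu0.
    rewrite ler_norml in h2; rewrite ler_norml in h3.
    have h4 := (KU xm hxm).2 Mxm.
    have p0 : pen xs xs = 0.
      by rewrite /pen subrr dotvE big1 // => i _; rewrite mxE mul0r.
    move: h1; rewrite /G p0.
    case/andP: h2 => h2a h2b; case/andP: h3 => h3a h3b.
    lra.
  move=> hp.
  have hxs : `|xs - xm| < del / 2.
    by rewrite distrC; apply: norm_lt_dot => //; rewrite divr_gt0.
  apply: proj_bound => w Tw.
  apply: (first_order (M := M) (g := ft^~ mu) (r := del / 2)) => //.
  - by rewrite divr_gt0.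
  move=> y My hy.
  apply: (Hxm y); rewrite inE; split; first exact: My.
  rewrite /=.
  have -> : xs - y = (xs - xm) + (xm - y) by rewrite addrA subrK.
  apply: (le_trans (ler_normD _ _)).
  have -> : del = del / 2 + del / 2 by rewrite -splitr.
  by rewrite ltW // ltrD.
rewrite /stationary_assoc limf_einfE.
apply/eqP; rewrite eq_le; apply/andP; split; last first.
  apply: (@le_trans _ _ (ereal_inf
     [set (enorm (rgrad M ft p.1 p.2))%:E | p in [set: 'rV[R]_n * R]])).
    by apply: le_ereal_inf_tmp => _ [p _ <-]; rewrite lee_fin /enorm sqrtr_ge0.
  by apply: ereal_sup_ubound; exists setT => //; exact: filterT.
apply: ge_ereal_sup => _ [V FV <-].
apply/lee_addgt0Pr => eps eps0; rewrite add0e.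
case: FV => [[A B] /= [FA FB] AB].
have /nbhs_ballP [r3 /= r30 Hr3] := FA.
pose eta := Num.min (Num.min (del / 2) r3) (eps / 2).
have del20 : 0 < del / 2 by rewrite divr_gt0.
have eps20 : 0 < eps / 2 by rewrite divr_gt0.
have eta0 : 0 < eta by rewrite /eta !lt_min del20 r30 eps20.
have eta1 : eta <= del / 2 by rewrite /eta !ge_min lexx.
have eta2 : eta <= r3 by rewrite /eta !ge_min lexx orbT.
have eta3 : eta <= eps / 2 by rewrite /eta !ge_min lexx !orbT.
pose eps' := eta ^+ 2 / (2 * kappa).
have eps'0 : 0 < eps' by rewrite divr_gt0 ?exprn_gt0 // mulr_gt0.
have Hn : \forall mu \near 0^'+, [/\ B mu, 0 < mu & `|0 - omega mu| < eps'].
  near=> mu; split.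
  - by near: mu; exact: FB.
  - by near: mu; exact: nbhs_right_gt.
  - by near: mu; exact: (cvgrPdist_lt omega 0).1 omcvg _ eps'0.
have [mu [Bmu mu0 omu]] := filter_ex Hn.
have [xm [Mxm hpen hgrad]] := key mu mu0.
have hom : 2 * (kappa * omega mu) < eta ^+ 2.
  have : omega mu < eps'.
    by apply: le_lt_trans omu; rewrite sub0r normrN ler_norm.
  rewrite /eps' ltr_pdivlMr ?mulr_gt0 // => h.
  have -> : 2 * (kappa * omega mu) = omega mu * (2 * kappa) by ring.
  exact: h.
have hp : pen xs xm < eta ^+ 2 by exact: le_lt_trans hpen hom.
have hp2 : pen xs xm < (del / 2) ^+ 2.
  apply: (lt_le_trans hp); rewrite !expr2; nra.
have hg := hgrad hp2.
have hxm : `|xs - xm| < eta by rewrite distrC; exact: norm_lt_dot.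
have hA : A xm.
  by apply: Hr3 => //; rewrite -ball_normE /ball_ /=; exact: lt_le_trans hxm eta2.
have hV : V (xm, mu) by apply: AB; split.
have : (ereal_inf [set (enorm (rgrad M ft p.1 p.2))%:E | p in V]
    <= (enorm (rgrad M ft xm mu))%:E)%E.
  by apply: ereal_inf_lbound; exists (xm, mu).
move/le_trans; apply; rewrite lee_fin /enorm.
have pp0 := @dotv_ge0 R n (rgrad M ft xm mu).
rewrite -ler_sqr ?nnegrE ?sqrtr_ge0 ?ltW // sqr_sqrtr //.
rewrite !expr2 in hp *; nra.
Unshelve. all: by end_near.
Qed.
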